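(* Suppose the total preorder $\succeq$ on $\mathcal{Q}_b$ is monotonic, continuous in the $\mathcal{L}_1$-topology, and satisfies the dual independence axiom. Then there exists a bounded, nondecreasing, continuous function $w:[0,1]\to\mathbb{R}$ such that $$U(\Phi)=\int_0^1\Phi(p)\,dw(p)$$ (a Stieltjes integral) is a numerical representation of $\succeq$ on $\mathcal{Q}_b$.
   Context: $\mathcal{Q}_b$ is the set of bounded, nondecreasing, left-continuous functions on $(0,1]$. The $\mathcal{L}_1$-topology on $\mathcal{Q}_b$ is given by the distance $\mathrm{dist}(\Phi,\Psi)=\int_0^1|\Phi(p)-\Psi(p)|\,dp$. A total preorder is reflexive, transitive, complete; $\succ$ its strict part; continuity means that for each $\Phi$ the sets $\{\Psi:\Psi\succeq\Phi\}$ and $\{\Psi:\Phi\succeq\Psi\}$ are closed. Monotonic: $\Phi\ge\Psi$ pointwise implies $\Phi\succeq\Psi$. Dual independence axiom: $\Phi\succ\Psi$ implies $\alpha\Phi+(1-\alpha)\Upsilon\succ\alpha\Psi+(1-\alpha)\Upsilon$ for all $\Upsilon\in\mathcal{Q}_b$, $\alpha\in(0,1)$. Numerical representation: $\Phi\succ\Psi\iff U(\Phi)>U(\Psi)$. *)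

(* Defs.v *)
From Stdlib Require Import Reals Lra ClassicalEpsilon.
Open Scope R_scope.

Definition I01 : Type := { p : R | 0 < p <= 1 }.

Definition bounded01 (f : I01 -> R) : Prop :=
  exists M : R, forall p : I01, Rabs (f p) <= M.

Definition nondecr01 (f : I01 -> R) : Prop :=
  forall p q : I01, proj1_sig p <= proj1_sig q -> f p <= f q.

Definition leftcont01 (f : I01 -> R) : Prop :=
  forall p : I01, forall eps : R, eps > 0 ->
    exists delta : R, delta > 0 /\
      forall q : I01, proj1_sig p - delta < proj1_sig q <= proj1_sig p ->
        Rabs (f q - f p) < eps.

Definition isQb (f : I01 -> R) : Prop :=
  bounded01 f /\ nondecr01 f /\ leftcont01 f.

Definition Qb : Type := { f : I01 -> R | isQb f }.

Definition Qfun (F : Qb) : I01 -> R := proj1_sig F.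

(* Extension of a function on (0,1] to R by 0 outside (0,1]
   (only the value at 0 matters for integrals over [0,1], and it is irrelevant). *)
Definition ext (f : I01 -> R) (x : R) : R :=
  match Rlt_le_dec 0 x with
  | left h0 =>
      match Rle_lt_dec x 1 with
      | left h1 => f (exist _ x (conj h0 h1))
      | right _ => 0
      end
  | right _ => 0
  end.

Fixpoint rsum (h : nat -> R) (n : nat) : R :=
  match n with
  | O => 0
  | S k => rsum h k + h k
  end.

Definition RS_integral (f g : R -> R) (a b I : R) : Prop :=
  forall eps : R, eps > 0 ->
    exists delta : R, delta > 0 /\
      forall (n : nat) (x t : nat -> R),
        x O = a -> x n = b ->
        (forall i : nat, (i < n)%nat ->
            x i < x (S i) /\ x (S i) - x i < delta /\ x i <= t i <= x (S i)) ->
        Rabs (rsum (fun i => f (t i) * (g (x (S i)) - g (x i))) n - I) < eps.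

Definition dist (F G : Qb) : R :=
  epsilon (inhabits 0)
    (fun I => RS_integral (fun x => Rabs (ext (Qfun F) x - ext (Qfun G) x))
                          (fun x => x) 0 1 I).

Definition L1closed (S : Qb -> Prop) : Prop :=
  forall F : Qb, ~ S F ->
    exists eps : R, eps > 0 /\ forall G : Qb, dist F G < eps -> ~ S G.

Definition strict (ge : Qb -> Qb -> Prop) (F G : Qb) : Prop :=
  ge F G /\ ~ ge G F.

Definition bounded_on01 (w : R -> R) : Prop :=
  exists M : R, forall x : R, 0 <= x <= 1 -> Rabs (w x) <= M.

Definition nondecr_on01 (w : R -> R) : Prop :=
  forall x y : R, 0 <= x -> x <= y -> y <= 1 -> w x <= w y.

Definition continuous_on01 (w : R -> R) : Prop :=
  forall x : R, 0 <= x <= 1 -> forall eps : R, eps > 0 ->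
    exists delta : R, delta > 0 /\
      forall y : R, 0 <= y <= 1 -> Rabs (y - x) < delta -> Rabs (w y - w x) < eps.

(* Main.v *)
Require Import Defs.
From Stdlib Require Import Reals Lra Lia ClassicalEpsilon Classical ProofIrrelevance FunctionalExtensionality.
Open Scope R_scope.

Lemma rsum_ext (f g : nat -> R) n : (forall i, (i < n)%nat -> f i = g i) -> rsum f n = rsum g n.
Proof. induction n; simpl; intros H; auto. rewrite IHn by (intros; apply H; lia). rewrite H by lia; auto. Qed.

Lemma rsum_le (f g : nat -> R) n : (forall i, (i < n)%nat -> f i <= g i) -> rsum f n <= rsum g n.
Proof. induction n; simpl; intros H; [lra|]. assert (rsum f n <= rsum g n) by (apply IHn; intros; apply H; lia).
 assert (f n <= g n) by (apply H; lia). lra. Qed.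

Lemma rsum_plus (f g : nat -> R) n : rsum (fun i => f i + g i) n = rsum f n + rsum g n.
Proof. induction n; simpl; [lra|]. rewrite IHn; lra. Qed.

Lemma rsum_minus (f g : nat -> R) n : rsum (fun i => f i - g i) n = rsum f n - rsum g n.
Proof. induction n; simpl; [lra|]. rewrite IHn; lra. Qed.

Lemma rsum_scal (c : R) (f : nat -> R) n : rsum (fun i => c * f i) n = c * rsum f n.
Proof. induction n; simpl; [lra|]. rewrite IHn; lra. Qed.

Lemma rsum_tele (h : nat -> R) n : rsum (fun i => h (S i) - h i) n = h n - h O.
Proof. induction n; simpl; [lra|]. rewrite IHn; lra. Qed.

Lemma rsum_zero n : rsum (fun _ => 0) n = 0.
Proof. induction n; simpl; [lra|]. rewrite IHn; lra. Qed.

Lemma rsum_tele_approx (f c e : nat -> R) n :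
  (forall i, (i < n)%nat -> Rabs (f i - (c (S i) - c i)) <= e (S i) - e i) ->
  Rabs (rsum f n - (c n - c O)) <= e n - e O.
Proof.
  intros H. rewrite <- rsum_tele, <- rsum_minus, <- rsum_tele.
  induction n; simpl. { rewrite Rabs_R0. lra. }
  assert (A := IHn (fun i Hi => H i ltac:(lia))). assert (B := H n ltac:(lia)).
  replace (rsum (fun i => f i - (c (S i) - c i)) n + (f n - (c (S n) - c n)))
    with ((rsum (fun i => f i - (c (S i) - c i)) n) + (f n - (c (S n) - c n))) by lra.
  eapply Rle_trans; [apply Rabs_triang|]. lra.
Qed.

Definition cst (c : R) : I01 -> R := fun _ => c.
Lemma cst_ok c : isQb (cst c).
Proof. split; [|split].
 - exists (Rabs c); intros; unfold cst; lra.
 - intros p q _; unfold cst; lra.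
 - intros p eps He; exists 1; split; [lra|]; intros; unfold cst. rewrite Rminus_diag, Rabs_R0; lra. Qed.
Definition Qconst (c : R) : Qb := exist _ (cst c) (cst_ok c).

Definition indf (a : R) : I01 -> R := fun p => if Rlt_dec a (proj1_sig p) then 1 else 0.
Lemma ind_ok a : isQb (indf a).
Proof. split; [|split].
 - exists 1; intros p; unfold indf; destruct Rlt_dec; rewrite ?Rabs_R1, ?Rabs_R0; lra.
 - intros p q H; unfold indf; destruct Rlt_dec; destruct Rlt_dec; lra.
 - intros p eps He. unfold indf. destruct (Rlt_dec a (proj1_sig p)) as [h|h].
   + exists (proj1_sig p - a); split; [lra|]. intros q Hq. destruct Rlt_dec; [|lra].
     rewrite Rminus_diag, Rabs_R0; lra.
   + exists 1; split; [lra|]. intros q Hq. destruct Rlt_dec; [lra|].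
     rewrite Rminus_diag, Rabs_R0; lra.
Qed.
Definition Ind (a : R) : Qb := exist _ (indf a) (ind_ok a).

Definition linf (a : R) (F : I01 -> R) (b : R) (G : I01 -> R) : I01 -> R :=
  fun p => Rmax 0 a * F p + Rmax 0 b * G p.
Lemma lin_ok a F b G : isQb F -> isQb G -> isQb (linf a F b G).
Proof.
  intros [[MF HMF] [mF cF]] [[MG HMG] [mG cG]].
  assert (A0 : 0 <= Rmax 0 a) by apply Rmax_l. assert (B0 : 0 <= Rmax 0 b) by apply Rmax_l.
  split; [|split].
 - exists (Rmax 0 a * MF + Rmax 0 b * MG). intros p. unfold linf.
   eapply Rle_trans; [apply Rabs_triang|]. rewrite !Rabs_mult. rewrite (Rabs_pos_eq (Rmax 0 a)), (Rabs_pos_eq (Rmax 0 b)) by auto.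
   apply Rplus_le_compat; apply Rmult_le_compat_l; auto.
 - intros p q H; unfold linf. apply Rplus_le_compat; apply Rmult_le_compat_l; auto.
 - intros p eps He. set (A := Rmax 0 a) in *. set (B := Rmax 0 b) in *.
   destruct (cF p (eps / (2 * (A + 1)))) as [d1 [d1p H1]]. { apply Rdiv_lt_0_compat; lra. }
   destruct (cG p (eps / (2 * (B + 1)))) as [d2 [d2p H2]]. { apply Rdiv_lt_0_compat; lra. }
   exists (Rmin d1 d2); split. { apply Rmin_glb_lt; auto. }
   intros q Hq. assert (Hq1 : proj1_sig p - d1 < proj1_sig q <= proj1_sig p).
   { assert (Rmin d1 d2 <= d1) by apply Rmin_l. lra. }
   assert (Hq2 : proj1_sig p - d2 < proj1_sig q <= proj1_sig p).
   { assert (Rmin d1 d2 <= d2) by apply Rmin_r. lra. }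
   specialize (H1 q Hq1). specialize (H2 q Hq2). unfold linf. fold A B.
   replace (A * F q + B * G q - (A * F p + B * G p)) with (A * (F q - F p) + B * (G q - G p)) by ring.
   eapply Rle_lt_trans; [apply Rabs_triang|]. rewrite !Rabs_mult, !(Rabs_pos_eq A), !(Rabs_pos_eq B) by auto.
   assert (E1 : A * Rabs (F q - F p) <= A * (eps / (2 * (A + 1)))) by (apply Rmult_le_compat_l; lra).
   assert (E2 : B * Rabs (G q - G p) <= B * (eps / (2 * (B + 1)))) by (apply Rmult_le_compat_l; lra).
   assert (E3 : A * (eps / (2 * (A + 1))) < eps / 2).
   { unfold Rdiv. rewrite Rinv_mult. apply Rmult_lt_reg_r with (2 * (A + 1)); [lra|].
     field_simplify; [|lra]. nra. }
   assert (E4 : B * (eps / (2 * (B + 1))) < eps / 2).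
   { unfold Rdiv. rewrite Rinv_mult. apply Rmult_lt_reg_r with (2 * (B + 1)); [lra|].
     field_simplify; [|lra]. nra. }
   lra.
Qed.
Definition Qlin (a : R) (F : Qb) (b : R) (G : Qb) : Qb :=
  exist _ (linf a (Qfun F) b (Qfun G)) (lin_ok a (Qfun F) b (Qfun G) (proj2_sig F) (proj2_sig G)).

Lemma ext_in (f : I01 -> R) x (h : 0 < x <= 1) : ext f x = f (exist _ x h).
Proof. destruct h as [ha hb]. unfold ext. destruct (Rlt_le_dec 0 x) as [h0|h0]; [|exfalso; lra].
  destruct (Rle_lt_dec x 1) as [h1|h1]; [|exfalso; lra]. f_equal. f_equal. apply proof_irrelevance. Qed.

Lemma ext_Q (f : I01 -> R) (p : I01) : ext f (proj1_sig p) = f p.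
Proof. destruct p as [x h]. simpl. apply ext_in. Qed.

Lemma ext_out (f : I01 -> R) x : x <= 0 -> ext f x = 0.
Proof. intros H. unfold ext. destruct (Rlt_le_dec 0 x); [exfalso; lra|auto]. Qed.

Lemma ext_mono (F : Qb) a b : 0 < a -> a <= b -> b <= 1 -> ext (Qfun F) a <= ext (Qfun F) b.
Proof. intros. rewrite (ext_in _ a ltac:(lra)), (ext_in _ b ltac:(lra)).
  destruct (proj2_sig F) as [_ [m _]]. apply m. simpl. lra. Qed.

Lemma Qbound (F : Qb) : exists M, 1 <= M /\ forall p, Rabs (Qfun F p) <= M.
Proof. destruct (proj2_sig F) as [[M HM] _]. exists (Rmax 1 M). split; [apply Rmax_l|].
  intros p. eapply Rle_trans; [apply HM| apply Rmax_r]. Qed.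

Lemma ext_bound (F : Qb) M x : (forall p, Rabs (Qfun F p) <= M) -> 0 <= M -> Rabs (ext (Qfun F) x) <= M.
Proof. intros H HM. unfold ext. destruct Rlt_le_dec; [destruct Rle_lt_dec|]; try (rewrite Rabs_R0; lra). apply H. Qed.

Lemma RS_unique f g I J : RS_integral f g 0 1 I -> RS_integral f g 0 1 J -> I = J.
Proof.
  intros HI HJ. destruct (Req_dec I J) as [|Hne]; auto. exfalso.
  assert (Hp : 0 < Rabs (I - J)) by (apply Rabs_pos_lt; intro; apply Hne; lra). set (e := Rabs (I - J) / 2).
  assert (ep : e > 0) by (unfold e; lra).
  destruct (HI e ep) as [d1 [d1p H1]]. destruct (HJ e ep) as [d2 [d2p H2]].
  destruct (archimed_cor1 (Rmin d1 d2)) as [N [HN N0]]. { apply Rmin_glb_lt; lra. }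
  assert (INR N > 0) by (apply lt_0_INR; lia).
  set (x := fun i : nat => INR i / INR N).
  assert (Hpart : forall d, Rmin d1 d2 <= d -> forall i, (i < N)%nat -> x i < x (S i) /\ x (S i) - x i < d /\ x i <= x i <= x (S i)).
  { intros d Hd i Hi. unfold x. rewrite S_INR. replace ((INR i + 1) / INR N - INR i / INR N) with (/ INR N) by (field; lra).
    assert (0 < / INR N) by (apply Rinv_0_lt_compat; lra).
    assert (INR i / INR N < (INR i + 1) / INR N). { unfold Rdiv. apply Rmult_lt_compat_r; lra. }
    split; [lra|]. split; lra. }
  assert (x0 : x O = 0) by (unfold x; simpl; unfold Rdiv; ring).
  assert (xN : x N = 1) by (unfold x; field; lra).
  specialize (H1 N x x x0 xN (Hpart d1 (Rmin_l _ _))).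
  specialize (H2 N x x x0 xN (Hpart d2 (Rmin_r _ _))).
  set (S := rsum _ N) in *.
  assert (Rabs (I - J) <= Rabs (S - J) + Rabs (S - I)).
  { replace (I - J) with ((S - J) - (S - I)) by ring. eapply Rle_trans; [apply Rabs_triang|]. rewrite Rabs_Ropp; lra. }
  unfold e in *. lra.
Qed.

Lemma dist_eq F G I :
  RS_integral (fun x => Rabs (ext (Qfun F) x - ext (Qfun G) x)) (fun x => x) 0 1 I -> Defs.dist F G = I.
Proof. intros H. unfold Defs.dist. apply (RS_unique _ _ _ _ (epsilon_spec _ _ (ex_intro _ I H)) H). Qed.

Lemma part_mono (x : nat -> R) n : (forall i, (i < n)%nat -> x i < x (S i)) ->
  forall i j, (i <= j)%nat -> (j <= n)%nat -> x i <= x j.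
Proof. intros H i j Hij. induction Hij; intros; [lra|]. assert (x m < x (S m)) by (apply H; lia).
  assert (x i <= x m) by (apply IHHij; lia). lra. Qed.

Lemma part_smono (x : nat -> R) n : (forall i, (i < n)%nat -> x i < x (S i)) ->
  forall i j, (i < j)%nat -> (j <= n)%nat -> x i < x j.
Proof. intros H i j Hij Hj. assert (x i < x (S i)) by (apply H; lia).
  assert (x (S i) <= x j) by (apply (part_mono x n H); lia). lra. Qed.

Definition clamp (lo hi y : R) := Rmax lo (Rmin hi y).

Lemma RS_id_tele (h : R -> R) (L : R) :
  (forall eps, eps > 0 -> exists delta, delta > 0 /\ exists c e : R -> R,
     c 1 - c 0 = L /\ e 1 - e 0 < eps /\
     forall u v t, 0 <= u -> u < v -> v <= 1 -> v - u < delta -> u <= t <= v ->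
       Rabs (h t * (v - u) - (c v - c u)) <= e v - e u) ->
  RS_integral h (fun x => x) 0 1 L.
Proof.
  intros H eps Heps. destruct (H eps Heps) as [d [dp [c [e [Hc [He Hb]]]]]].
  exists d; split; auto. intros n x t x0 xn Hp.
  assert (Hm : forall i, (i < n)%nat -> x i < x (S i)) by (intros i Hi; apply Hp; auto).
  assert (A := rsum_tele_approx (fun i => h (t i) * (x (S i) - x i)) (fun i => c (x i)) (fun i => e (x i)) n).
  cbv beta in A. rewrite x0, xn, Hc in A.
  eapply Rle_lt_trans; [apply A|lra]. intros i Hi. destruct (Hp i Hi) as [h1 [h2 h3]].
  apply Hb; auto.
  - rewrite <- x0. apply (part_mono x n Hm); lia.
  - rewrite <- xn. apply (part_mono x n Hm); lia.
Qed.

Lemma clamp_range lo hi y : lo <= hi -> lo <= clamp lo hi y <= hi.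
Proof. intros. unfold clamp, Rmax, Rmin. repeat destruct Rle_dec; lra. Qed.
Lemma clamp_lip lo hi y z : lo <= hi -> y <= z -> 0 <= clamp lo hi z - clamp lo hi y <= z - y.
Proof. intros. unfold clamp, Rmax, Rmin. repeat destruct Rle_dec; lra. Qed.
Lemma clamp_id lo hi y : lo <= y <= hi -> clamp lo hi y = y.
Proof. intros. unfold clamp, Rmax, Rmin. repeat destruct Rle_dec; lra. Qed.
Lemma clamp_lo lo hi y : y <= lo <= hi -> clamp lo hi y = lo.
Proof. intros. unfold clamp, Rmax, Rmin. repeat destruct Rle_dec; lra. Qed.
Lemma clamp_hi lo hi y : lo <= hi <= y -> clamp lo hi y = hi.
Proof. intros. unfold clamp, Rmax, Rmin. repeat destruct Rle_dec; lra. Qed.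
Lemma clamp_abs lo hi y z : lo <= hi -> Rabs (clamp lo hi z - clamp lo hi y) <= Rabs (z - y).
Proof. intros. destruct (Rle_dec y z).
  - destruct (clamp_lip lo hi y z) as [A B]; auto. rewrite !Rabs_pos_eq; lra.
  - destruct (clamp_lip lo hi z y) as [A B]; auto; [lra|]. rewrite !Rabs_left1; lra. Qed.

Lemma ext_cst c t : 0 < t <= 1 -> ext (Qfun (Qconst c)) t = c.
Proof. intros h. rewrite (ext_in _ t h). reflexivity. Qed.

Lemma dist_const a b : Defs.dist (Qconst a) (Qconst b) = Rabs (a - b).
Proof.
  apply dist_eq. apply RS_id_tele. intros eps Heps. set (K := Rabs (a - b)).
  assert (K0 : 0 <= K) by apply Rabs_pos.
  set (d := eps / (2 * (K + 1))). assert (dp : d > 0) by (unfold d; apply Rdiv_lt_0_compat; lra).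
  exists d; split; auto. exists (fun y => K * y), (fun y => K * clamp 0 d y). split; [ring|]. split.
  - rewrite (clamp_lo 0 d 0) by lra. assert (W := clamp_range 0 d 1 ltac:(lra)).
    assert (K * clamp 0 d 1 <= K * d) by (apply Rmult_le_compat_l; lra).
    assert (K * d < eps). { unfold d. unfold Rdiv. rewrite Rinv_mult.
      apply Rmult_lt_reg_r with (2 * (K + 1)); [lra|]. field_simplify; [|lra]. nra. }
    lra.
  - intros u v t Hu Huv Hv Hd Ht. destruct (Rlt_le_dec 0 t) as [tp|tn].
    + rewrite !ext_cst by lra. fold K. replace (K * (v - u) - (K * v - K * u)) with 0 by ring.
      rewrite Rabs_R0. assert (W := clamp_lip 0 d u v ltac:(lra) ltac:(lra)).
      replace (K * clamp 0 d v - K * clamp 0 d u) with (K * (clamp 0 d v - clamp 0 d u)) by ring.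
      apply Rmult_le_pos; lra.
    + rewrite !ext_out by lra. rewrite Rminus_diag, Rabs_R0.
      assert (u = 0) by lra. subst u. rewrite (clamp_id 0 d v) by lra. rewrite (clamp_lo 0 d 0) by lra.
      replace (0 * (v - 0) - (K * v - K * 0)) with (- (K * v)) by ring. rewrite Rabs_Ropp.
      rewrite Rabs_pos_eq by nra. lra.
Qed.

Lemma ext_ind a t : 0 < t <= 1 -> ext (Qfun (Ind a)) t = if Rlt_dec a t then 1 else 0.
Proof. intros h. rewrite (ext_in _ t h). reflexivity. Qed.

Lemma hind a b t : 0 <= a -> a <= b -> 0 <= t <= 1 ->
  ((a < t <= b) -> Rabs (ext (Qfun (Ind a)) t - ext (Qfun (Ind b)) t) = 1) /\
  (~ (a < t <= b) -> Rabs (ext (Qfun (Ind a)) t - ext (Qfun (Ind b)) t) = 0).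
Proof.
  intros ha hab ht. destruct (Rlt_le_dec 0 t) as [tp|tn].
  - rewrite !ext_ind by lra. split; intros H.
    + destruct (Rlt_dec a t); [|lra]. destruct (Rlt_dec b t); [lra|]. rewrite Rminus_0_r, Rabs_R1; auto.
    + destruct (Rlt_dec a t); destruct (Rlt_dec b t); try (rewrite Rminus_diag, Rabs_R0; auto).
      * exfalso; apply H; lra.
      * replace (0 - 1) with (-1) by ring. exfalso. lra.
  - rewrite !ext_out by lra. rewrite Rminus_diag, Rabs_R0. split; intros; [lra|auto].
Qed.

Lemma dist_ind a b : 0 <= a <= b -> b <= 1 -> Defs.dist (Ind a) (Ind b) = b - a.
Proof.
  intros Hab Hb.
  apply dist_eq. apply RS_id_tele. intros eps Heps.
  set (d := eps / 8). assert (dp : d > 0) by (unfold d; lra).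
  exists d; split; auto.
  exists (clamp a b), (fun y => clamp (a - d) (a + d) y + clamp (b - d) (b + d) y). split.
  { rewrite (clamp_hi a b 1), (clamp_lo a b 0) by lra. ring. }
  split.
  { assert (W1 := clamp_range (a - d) (a + d) 1 ltac:(lra)). assert (W2 := clamp_range (a - d) (a + d) 0 ltac:(lra)).
    assert (W3 := clamp_range (b - d) (b + d) 1 ltac:(lra)). assert (W4 := clamp_range (b - d) (b + d) 0 ltac:(lra)).
    unfold d in *. lra. }
  intros u v t Hu Huv Hv Hd Ht. cbv beta.
  destruct (hind a b t ltac:(lra) ltac:(lra) ltac:(lra)) as [H1 H0].
  set (h := Rabs _) in *.
  assert (Lc := clamp_lip a b u v ltac:(lra) ltac:(lra)).
  assert (La := clamp_lip (a - d) (a + d) u v ltac:(lra) ltac:(lra)).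
  assert (Lb := clamp_lip (b - d) (b + d) u v ltac:(lra) ltac:(lra)).
  assert (hr : 0 <= h <= 1).
  { destruct (classic (a < t <= b)) as [C|C]; [rewrite (H1 C)|rewrite (H0 C)]; lra. }
  assert (Hgen : Rabs (h * (v - u) - (clamp a b v - clamp a b u)) <= v - u).
  { apply Rabs_le. split; nra. }
  destruct (Rle_dec u a) as [ua|ua]; [destruct (Rle_dec a v) as [av|av]|].
  -
    rewrite (clamp_id (a - d) (a + d) u), (clamp_id (a - d) (a + d) v) by lra. lra.
  -
    rewrite (H0 ltac:(lra)). rewrite (clamp_lo a b u), (clamp_lo a b v) by lra.
    replace (0 * (v - u) - (a - a)) with 0 by ring. rewrite Rabs_R0. lra.
  - destruct (Rle_dec v b) as [vb|vb].
    +
      rewrite (H1 ltac:(lra)). rewrite (clamp_id a b u), (clamp_id a b v) by lra.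
      replace (1 * (v - u) - (v - u)) with 0 by ring. rewrite Rabs_R0. lra.
    + destruct (Rle_dec u b) as [ub|ub].
      * rewrite (clamp_id (b - d) (b + d) u), (clamp_id (b - d) (b + d) v) by lra. lra.
      * rewrite (H0 ltac:(lra)). rewrite (clamp_hi a b u), (clamp_hi a b v) by lra.
        replace (0 * (v - u) - (b - b)) with 0 by ring. rewrite Rabs_R0. lra.
Qed.

Record Hyps (ge : Qb -> Qb -> Prop) : Prop := mkH {
  h_refl : forall F : Qb, ge F F;
  h_trans : forall F G H : Qb, ge F G -> ge G H -> ge F H;
  h_compl : forall F G : Qb, ge F G \/ ge G F;
  h_mono : forall F G : Qb, (forall p : I01, Qfun G p <= Qfun F p) -> ge F G;
  h_cont : forall F : Qb, L1closed (fun G => ge G F) /\ L1closed (fun G => ge F G);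
  h_indep : forall (F G H X Y : Qb) (alpha : R), 0 < alpha < 1 ->
     (forall p : I01, Qfun X p = alpha * Qfun F p + (1 - alpha) * Qfun H p) ->
     (forall p : I01, Qfun Y p = alpha * Qfun G p + (1 - alpha) * Qfun H p) ->
     strict ge F G -> strict ge X Y }.

Lemma st_ge_tr ge (HH : Hyps ge) A B D : strict ge A B -> ge B D -> strict ge A D.
Proof. intros [h1 h2] h3. split. { eapply (h_trans ge HH); eauto. }
  intro h4. apply h2. eapply (h_trans ge HH); eauto. Qed.
Lemma ge_st_tr ge (HH : Hyps ge) A B D : ge A B -> strict ge B D -> strict ge A D.
Proof. intros h1 [h2 h3]. split. { eapply (h_trans ge HH); eauto. }
  intro h4. apply h3. eapply (h_trans ge HH); eauto. Qed.
Lemma not_ge_st ge (HH : Hyps ge) A B : ~ ge A B -> strict ge B A.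
Proof. intros h. split; auto. destruct (h_compl ge HH A B); tauto. Qed.

Lemma const_mono ge (HH : Hyps ge) a b : a <= b -> ge (Qconst b) (Qconst a).
Proof. intros. apply (h_mono ge HH). intros p. simpl. unfold cst. lra. Qed.

Lemma mixconst ge (HH : Hyps ge) a b al h : strict ge (Qconst a) (Qconst b) -> 0 < al < 1 ->
  strict ge (Qconst (al * a + (1 - al) * h)) (Qconst (al * b + (1 - al) * h)).
Proof. intros S Hal. apply (h_indep ge HH (Qconst a) (Qconst b) (Qconst h) _ _ al Hal); auto. Qed.

Lemma const_strict_all ge (HH : Hyps ge) : (exists a b, strict ge (Qconst a) (Qconst b)) ->
  forall c c', c < c' -> strict ge (Qconst c') (Qconst c).
Proof.
  intros [a [b S]] c c' Hc.
  assert (ab : b < a). { destruct (Rlt_le_dec b a); auto. exfalso. destruct S as [_ S]. apply S. apply (const_mono ge HH); auto. }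
  set (al := Rmin (1/2) ((c' - c) / (a - b))).
  assert (al0 : 0 < al). { unfold al. apply Rmin_glb_lt; [lra|]. apply Rdiv_lt_0_compat; lra. }
  assert (al1 : al <= 1/2) by (unfold al; apply Rmin_l).
  assert (al2 : al <= (c' - c) / (a - b)) by (unfold al; apply Rmin_r).
  assert (al3 : al * (a - b) <= c' - c).
  { apply Rmult_le_compat_r with (r := a - b) in al2; [|lra]. unfold Rdiv in al2.
    rewrite Rmult_assoc, Rinv_l in al2 by lra. lra. }
  set (h := (c - al * b) / (1 - al)).
  assert (E1 : al * b + (1 - al) * h = c) by (unfold h; field; lra).
  assert (E2 : al * a + (1 - al) * h = c + al * (a - b)) by (unfold h; field; lra).
  assert (M := mixconst ge HH a b al h S ltac:(lra)). rewrite E1, E2 in M.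
  eapply (ge_st_tr ge HH); eauto. apply (const_mono ge HH); auto. lra.
Qed.

Lemma Qbound_lr (F : Qb) M : (forall p, Rabs (Qfun F p) <= M) -> forall p, - M <= Qfun F p <= M.
Proof. intros H p. specialize (H p). revert H. unfold Rabs. destruct Rcase_abs; lra. Qed.

Lemma CE_ex ge (HH : Hyps ge) (ND : exists a b, strict ge (Qconst a) (Qconst b)) F :
  exists s, ge (Qconst s) F /\ ge F (Qconst s).
Proof.
  assert (CS := const_strict_all ge HH ND).
  destruct (Qbound F) as [M [M1 HM]]. assert (HM' := Qbound_lr F M HM).
  set (E := fun c => ge F (Qconst c)).
  assert (Eb : bound E).
  { exists M. intros c Ec. destruct (Rle_dec c M) as [|n]; auto. exfalso.
    assert (S1 : strict ge (Qconst c) F).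
    { eapply (st_ge_tr ge HH); [apply CS|]. { apply Rnot_le_lt; exact n. }
      apply (h_mono ge HH). intros p. simpl. unfold cst. apply HM'. }
    destruct S1; auto. }
  assert (Ene : exists c, E c). { exists (- M). unfold E. apply (h_mono ge HH). intros p; simpl; unfold cst; apply HM'. }
  destruct (completeness E Eb Ene) as [s [Hub Hlub]].
  exists s. split.
  - apply NNPP. intros N. destruct (proj1 (h_cont ge HH F) (Qconst s) N) as [eps [ep Heps]].
    set (c := s + eps / 2). apply (Heps (Qconst c)).
    + rewrite dist_const. unfold c. replace (s - (s + eps / 2)) with (- (eps / 2)) by ring.
      rewrite Rabs_Ropp, Rabs_pos_eq; lra.
    + destruct (h_compl ge HH F (Qconst c)) as [G|G]; auto. exfalso.
      assert (c <= s) by (apply Hub; exact G). unfold c in *; lra.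
  - apply NNPP. intros N. destruct (proj2 (h_cont ge HH F) (Qconst s) N) as [eps [ep Heps]].
    assert (Hc : exists c, E c /\ s - eps < c).
    { apply NNPP. intros Hn. assert (s <= s - eps); [|lra]. apply Hlub. intros c Ec.
      destruct (Rle_dec c (s - eps)); auto. exfalso. apply Hn. exists c. split; auto. lra. }
    destruct Hc as [c [Ec Hc]]. assert (c <= s) by (apply Hub; auto).
    apply (Heps (Qconst c)); auto. rewrite dist_const. rewrite Rabs_pos_eq; lra.
Qed.

Lemma Qlin_val a F b G p : Qfun (Qlin a F b G) p = Rmax 0 a * Qfun F p + Rmax 0 b * Qfun G p.
Proof. reflexivity. Qed.
Lemma Qconst_val c p : Qfun (Qconst c) p = c.
Proof. reflexivity. Qed.
Lemma Ind_val a p : Qfun (Ind a) p = if Rlt_dec a (proj1_sig p) then 1 else 0.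
Proof. reflexivity. Qed.
Lemma rmax0 x : 0 <= x -> Rmax 0 x = x.
Proof. intros. apply Rmax_right; auto. Qed.

Definition ND ge := exists a b, strict ge (Qconst a) (Qconst b).

Definition V ge (HH : Hyps ge) (nd : ND ge) (F : Qb) : R :=
  proj1_sig (constructive_indefinite_description _ (CE_ex ge HH nd F)).

Lemma V_spec ge HH nd F : ge (Qconst (V ge HH nd F)) F /\ ge F (Qconst (V ge HH nd F)).
Proof. unfold V. destruct constructive_indefinite_description as [s Hs]. exact Hs. Qed.

Lemma st_tr ge (HH : Hyps ge) A B D : strict ge A B -> strict ge B D -> strict ge A D.
Proof. intros h1 h2. apply (st_ge_tr ge HH _ B); auto. apply h2. Qed.

Lemma V_strict ge HH nd F G : strict ge F G <-> V ge HH nd F > V ge HH nd G.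
Proof.
  assert (CS := const_strict_all ge HH nd).
  destruct (V_spec ge HH nd F) as [F1 F2]. destruct (V_spec ge HH nd G) as [G1 G2].
  split.
  - intros [S1 S2]. apply Rnot_le_lt. intros Hle. apply S2.
    apply (h_trans ge HH _ _ _ G2). apply (h_trans ge HH _ _ _ (const_mono ge HH _ _ Hle)). auto.
  - intros Hlt. specialize (CS _ _ Hlt). split.
    + apply (h_trans ge HH _ _ _ F2). apply (h_trans ge HH _ _ _ (proj1 CS)). auto.
    + intros Hc. apply (proj2 CS). apply (h_trans ge HH _ _ _ G1). apply (h_trans ge HH _ _ _ Hc). auto.
Qed.

Lemma V_const ge HH nd c : V ge HH nd (Qconst c) = c.
Proof.
  assert (CS := const_strict_all ge HH nd).
  destruct (V_spec ge HH nd (Qconst c)) as [F1 F2]. set (v := V ge HH nd (Qconst c)) in *.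
  destruct (Rtotal_order v c) as [h|[h|h]]; auto; exfalso.
  - apply (proj2 (CS _ _ h)). auto.
  - apply (proj2 (CS _ _ h)). auto.
Qed.

Lemma V_mono ge HH nd F G : (forall p, Qfun G p <= Qfun F p) -> V ge HH nd G <= V ge HH nd F.
Proof. intros H. apply Rnot_lt_le. intros Hlt. apply (proj2 (V_strict ge HH nd G F)) in Hlt.
  apply (proj2 Hlt). apply (h_mono ge HH). auto. Qed.

Lemma V_ext ge HH nd F G : (forall p, Qfun G p = Qfun F p) -> V ge HH nd G = V ge HH nd F.
Proof. intros H. apply Rle_antisym; apply V_mono; intros p; rewrite H; lra. Qed.

Lemma mix_strict_l ge (HH : Hyps ge) A B Hf al : 0 < al < 1 -> strict ge A B ->
  strict ge (Qlin al A (1 - al) Hf) (Qlin al B (1 - al) Hf).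
Proof. intros Hal S. apply (h_indep ge HH A B Hf _ _ al Hal); auto; intros p; rewrite Qlin_val, !rmax0 by lra; auto. Qed.

Lemma mix_strict_r ge (HH : Hyps ge) A B Hf al : 0 < al < 1 -> strict ge A B ->
  strict ge (Qlin al Hf (1 - al) A) (Qlin al Hf (1 - al) B).
Proof. intros Hal S. apply (h_indep ge HH A B Hf _ _ (1 - al) ltac:(lra)); auto;
  intros p; rewrite Qlin_val, !rmax0 by lra; ring. Qed.

Lemma V_mixconst ge HH nd al x y : 0 < al < 1 ->
  V ge HH nd (Qlin al (Qconst x) (1 - al) (Qconst y)) = al * x + (1 - al) * y.
Proof. intros Hal. rewrite <- (V_const ge HH nd (al * x + (1 - al) * y)). apply V_ext.
  intros p. rewrite Qlin_val, !rmax0 by lra. reflexivity. Qed.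

Lemma V_mix ge HH nd al F G : 0 < al < 1 ->
  V ge HH nd (Qlin al F (1 - al) G) = al * V ge HH nd F + (1 - al) * V ge HH nd G.
Proof.
  intros Hal. set (a := V ge HH nd F). set (b := V ge HH nd G).
  assert (VS := V_strict ge HH nd).
  assert (up : forall e, e > 0 -> V ge HH nd (Qlin al F (1 - al) G) < al * a + (1 - al) * b + e).
  { intros e ep.
    assert (S1 : strict ge (Qconst (a + e)) F) by (apply VS; rewrite V_const; unfold a; lra).
    assert (S3 : strict ge (Qconst (b + e)) G) by (apply VS; rewrite V_const; unfold b; lra).
    assert (T := st_tr ge HH _ _ _ (mix_strict_r ge HH _ _ (Qconst (a + e)) al Hal S3) (mix_strict_l ge HH _ _ G al Hal S1)).
    apply VS in T. rewrite V_mixconst in T by auto. lra. }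
  assert (lo : forall e, e > 0 -> V ge HH nd (Qlin al F (1 - al) G) > al * a + (1 - al) * b - e).
  { intros e ep.
    assert (S1 : strict ge F (Qconst (a - e))) by (apply VS; rewrite V_const; unfold a; lra).
    assert (S3 : strict ge G (Qconst (b - e))) by (apply VS; rewrite V_const; unfold b; lra).
    assert (T := st_tr ge HH _ _ _ (mix_strict_l ge HH _ _ G al Hal S1) (mix_strict_r ge HH _ _ (Qconst (a - e)) al Hal S3)).
    apply VS in T. rewrite V_mixconst in T by auto. lra. }
  set (v := V ge HH nd (Qlin al F (1 - al) G)) in *.
  destruct (Rtotal_order v (al * a + (1 - al) * b)) as [h|[h|h]]; auto.
  - specialize (lo (al * a + (1 - al) * b - v) ltac:(lra)). lra.
  - specialize (up (v - (al * a + (1 - al) * b)) ltac:(lra)). lra.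
Qed.

Lemma V_hom ge HH nd s F G : V ge HH nd (Qlin s F 0 G) = Rmax 0 s * V ge HH nd F.
Proof.
  assert (s0 : 0 <= Rmax 0 s) by apply Rmax_l. set (t := Rmax 0 s) in *.
  assert (Hv : forall p, Qfun (Qlin s F 0 G) p = t * Qfun F p).
  { intros p. rewrite Qlin_val. rewrite (rmax0 0) by lra. fold t. ring. }
  destruct (Rtotal_order t 0) as [h|[h|h]]; [lra| |].
  - rewrite h, Rmult_0_l. transitivity (V ge HH nd (Qconst 0)); [|apply V_const]. apply V_ext.
    intros p. rewrite Qconst_val, Hv, h. ring.
  - destruct (Rtotal_order t 1) as [h1|[h1|h1]].
    + rewrite (V_ext ge HH nd (Qlin t F (1 - t) (Qconst 0))).
      * rewrite V_mix by lra. rewrite V_const. ring.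
      * intros p. rewrite Hv, Qlin_val, Qconst_val, !rmax0 by lra. ring.
    + rewrite h1, Rmult_1_l. apply V_ext. intros p. rewrite Hv, h1. ring.
    + assert (E : V ge HH nd F = V ge HH nd (Qlin (/ t) (Qlin s F 0 G) (1 - / t) (Qconst 0))).
      { apply V_ext. intros p. rewrite Qlin_val, Hv, Qconst_val.
        assert (0 < / t < 1). { split. apply Rinv_0_lt_compat; lra. rewrite <- Rinv_1. apply Rinv_lt_contravar; lra. }
        rewrite !rmax0 by lra. field. lra. }
      assert (0 < / t < 1). { split. apply Rinv_0_lt_compat; lra. rewrite <- Rinv_1. apply Rinv_lt_contravar; lra. }
      rewrite V_mix, V_const in E by lra. rewrite E. field. lra.
Qed.

Lemma V_lin ge HH nd a F b G :
  V ge HH nd (Qlin a F b G) = Rmax 0 a * V ge HH nd F + Rmax 0 b * V ge HH nd G.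
Proof.
  assert (a0 : 0 <= Rmax 0 a) by apply Rmax_l. assert (b0 : 0 <= Rmax 0 b) by apply Rmax_l.
  set (A := Rmax 0 a) in *. set (B := Rmax 0 b) in *.
  destruct (Req_dec A 0) as [hA|hA].
  { rewrite hA. rewrite (V_ext ge HH nd (Qlin b G 0 G)), V_hom. fold B; ring.
    intros p. rewrite !Qlin_val. fold A B. rewrite hA, (rmax0 0) by lra. ring. }
  destruct (Req_dec B 0) as [hB|hB].
  { rewrite hB. rewrite (V_ext ge HH nd (Qlin a F 0 F)), V_hom. fold A; ring.
    intros p. rewrite !Qlin_val. fold A B. rewrite hB, (rmax0 0) by lra. ring. }
  set (s := A + B).
  assert (0 < A / s < 1). { unfold s. split. apply Rdiv_lt_0_compat; lra.
    apply Rmult_lt_reg_r with (A + B); [lra|]. field_simplify; lra. }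
  assert (hs : 0 < s) by (unfold s; lra).
  rewrite (V_ext ge HH nd (Qlin (A / s) (Qlin s F 0 F) (1 - A / s) (Qlin s G 0 G))).
  - rewrite V_mix, !V_hom by auto. rewrite !rmax0 by lra. unfold s. field. lra.
  - intros p. rewrite !Qlin_val. fold A B. rewrite !rmax0 by lra.
    unfold s. field. lra.
Qed.

Lemma dist_sym F G : Defs.dist F G = Defs.dist G F.
Proof. unfold Defs.dist.
  replace (fun x => Rabs (ext (Qfun F) x - ext (Qfun G) x)) with (fun x => Rabs (ext (Qfun G) x - ext (Qfun F) x)); auto.
  apply functional_extensionality. intros x. apply Rabs_minus_sym. Qed.

Lemma dist_ind_abs a b : 0 <= a <= 1 -> 0 <= b <= 1 -> Defs.dist (Ind a) (Ind b) = Rabs (b - a).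
Proof. intros. destruct (Rle_dec a b).
  - rewrite dist_ind by lra. rewrite Rabs_pos_eq; lra.
  - rewrite dist_sym, dist_ind by lra. rewrite Rabs_left1; lra. Qed.

Lemma V_le_c ge HH nd F c : ge (Qconst c) F -> V ge HH nd F <= c.
Proof. intros H. apply Rnot_lt_le. intros Hl. assert (S : strict ge F (Qconst c)).
  { apply (V_strict ge HH nd). rewrite V_const. lra. } apply (proj2 S); auto. Qed.
Lemma V_ge_c ge HH nd F c : ge F (Qconst c) -> c <= V ge HH nd F.
Proof. intros H. apply Rnot_lt_le. intros Hl. assert (S : strict ge (Qconst c) F).
  { apply (V_strict ge HH nd). rewrite V_const. lra. } apply (proj2 S); auto. Qed.

Lemma V_cont ge HH nd F eps : eps > 0 -> exists delta, delta > 0 /\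
  forall G, Defs.dist F G < delta -> Rabs (V ge HH nd G - V ge HH nd F) < eps.
Proof.
  intros ep. set (v := V ge HH nd F).
  assert (N1 : ~ ge F (Qconst (v + eps))). { intros H. apply (V_ge_c ge HH nd) in H. fold v in H. lra. }
  assert (N2 : ~ ge (Qconst (v - eps)) F). { intros H. apply (V_le_c ge HH nd) in H. fold v in H. lra. }
  destruct (proj1 (h_cont ge HH (Qconst (v + eps))) F N1) as [d1 [d1p H1]].
  destruct (proj2 (h_cont ge HH (Qconst (v - eps))) F N2) as [d2 [d2p H2]].
  exists (Rmin d1 d2). split. { apply Rmin_glb_lt; auto. }
  intros G HG. assert (G1 := H1 G (Rlt_le_trans _ _ _ HG (Rmin_l _ _))).
  assert (G2 := H2 G (Rlt_le_trans _ _ _ HG (Rmin_r _ _))).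
  assert (A1 : V ge HH nd G < v + eps).
  { apply Rnot_le_lt. intros Hl. apply G1. apply NNPP. intros N.
    assert (S := not_ge_st ge HH _ _ N). apply (V_strict ge HH nd) in S. rewrite V_const in S. lra. }
  assert (A2 : V ge HH nd G > v - eps).
  { apply Rnot_le_lt. intros Hl. apply G2. apply NNPP. intros N.
    assert (S := not_ge_st ge HH _ _ N). apply (V_strict ge HH nd) in S. rewrite V_const in S. lra. }
  apply Rabs_def1; lra.
Qed.

Definition wf ge HH nd (q : R) : R := 1 - V ge HH nd (Ind (clamp 0 1 q)).

Lemma V_Ind ge HH nd q : 0 <= q <= 1 -> V ge HH nd (Ind q) = 1 - wf ge HH nd q.
Proof. intros h. unfold wf. rewrite clamp_id by lra. ring. Qed.

Lemma w_0 ge HH nd : wf ge HH nd 0 = 0.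
Proof. unfold wf. rewrite clamp_id by lra. rewrite (V_ext ge HH nd (Qconst 1)), V_const; [ring|].
  intros p. rewrite Ind_val, Qconst_val. destruct p as [x hx]. simpl. destruct Rlt_dec; auto. lra. Qed.

Lemma w_1 ge HH nd : wf ge HH nd 1 = 1.
Proof. unfold wf. rewrite clamp_id by lra. rewrite (V_ext ge HH nd (Qconst 0)), V_const; [ring|].
  intros p. rewrite Ind_val, Qconst_val. destruct p as [x hx]. simpl. destruct Rlt_dec; auto. lra. Qed.

Lemma w_mono ge HH nd x y : x <= y -> wf ge HH nd x <= wf ge HH nd y.
Proof. intros H. unfold wf. assert (W := clamp_lip 0 1 x y ltac:(lra) H).
  assert (V ge HH nd (Ind (clamp 0 1 y)) <= V ge HH nd (Ind (clamp 0 1 x))); [|lra].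
  apply V_mono. intros p. rewrite !Ind_val. destruct Rlt_dec; destruct Rlt_dec; lra. Qed.

Lemma w_bnd ge HH nd x : 0 <= wf ge HH nd x <= 1.
Proof. unfold wf. split.
  - assert (V ge HH nd (Ind (clamp 0 1 x)) <= V ge HH nd (Qconst 1)) by
      (apply V_mono; intros p; rewrite Ind_val, Qconst_val; destruct Rlt_dec; lra).
    rewrite V_const in H. lra.
  - assert (V ge HH nd (Qconst 0) <= V ge HH nd (Ind (clamp 0 1 x))) by
      (apply V_mono; intros p; rewrite Ind_val, Qconst_val; destruct Rlt_dec; lra).
    rewrite V_const in H. lra. Qed.

Lemma w_cont ge HH nd x eps : eps > 0 -> exists delta, delta > 0 /\
  forall y, Rabs (y - x) < delta -> Rabs (wf ge HH nd y - wf ge HH nd x) < eps.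
Proof.
  intros ep. destruct (V_cont ge HH nd (Ind (clamp 0 1 x)) eps ep) as [d [dp Hd]].
  exists d. split; auto. intros y Hy.
  assert (R1 := clamp_range 0 1 x ltac:(lra)). assert (R2 := clamp_range 0 1 y ltac:(lra)).
  assert (D : Defs.dist (Ind (clamp 0 1 x)) (Ind (clamp 0 1 y)) < d).
  { rewrite dist_ind_abs by lra. eapply Rle_lt_trans; [apply clamp_abs; lra|auto]. }
  specialize (Hd _ D). unfold wf. replace (1 - V ge HH nd (Ind (clamp 0 1 y)) - (1 - V ge HH nd (Ind (clamp 0 1 x))))
    with (- (V ge HH nd (Ind (clamp 0 1 y)) - V ge HH nd (Ind (clamp 0 1 x)))) by ring.
  rewrite Rabs_Ropp. auto.
Qed.

Lemma w_contpt ge HH nd x : continuity_pt (wf ge HH nd) x.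
Proof. unfold continuity_pt, continue_in, limit1_in, limit_in. intros eps ep.
  destruct (w_cont ge HH nd x eps ep) as [d [dp Hd]]. exists d. split; auto.
  intros y [_ Hy]. simpl in *. unfold R_dist in *. auto. Qed.

Lemma w_unif ge HH nd (eps : posreal) : exists delta : posreal, forall x y, 0 <= x <= 1 -> 0 <= y <= 1 ->
  Rabs (x - y) < delta -> Rabs (wf ge HH nd x - wf ge HH nd y) < eps.
Proof. apply (Heine (wf ge HH nd) (fun c => 0 <= c <= 1) (compact_P3 0 1)). intros; apply w_contpt. Qed.

Fixpoint stepQ (l x : nat -> R) (k : nat) : Qb :=
  match k with
  | O => Qconst (l O)
  | S k' => Qlin 1 (stepQ l x k') (l (S k') - l k') (Ind (x (S k')))
  end.

Lemma V_step ge HH nd l x k : V ge HH nd (stepQ l x k) =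
  l O + rsum (fun i => Rmax 0 (l (S i) - l i) * V ge HH nd (Ind (x (S i)))) k.
Proof. induction k; cbn [stepQ rsum]. { rewrite V_const; ring. }
  rewrite V_lin, IHk, (rmax0 1) by lra. ring. Qed.

Lemma step_val l x k p : Qfun (stepQ l x k) p =
  l O + rsum (fun i => Rmax 0 (l (S i) - l i) * (if Rlt_dec (x (S i)) (proj1_sig p) then 1 else 0)) k.
Proof. induction k; cbn [stepQ rsum]. { rewrite Qconst_val; ring. }
  rewrite Qlin_val, IHk, (rmax0 1), Ind_val by lra. ring. Qed.

Lemma step_eval l x n (Hm : forall i, (i < n)%nat -> x i < x (S i))
  (Hl : forall i, (S i < n)%nat -> l i <= l (S i)) j p :
  (j < n)%nat -> x j < proj1_sig p <= x (S j) ->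
  forall k, (k < n)%nat -> Qfun (stepQ l x k) p = l (Nat.min j k).
Proof.
  intros Hj Hp k. induction k; intros Hk.
  { rewrite Nat.min_0_r. reflexivity. }
  simpl stepQ. rewrite Qlin_val, (rmax0 1) by lra. rewrite Ind_val, IHk by lia.
  rewrite (rmax0 (l (S k) - l k)) by (assert (l k <= l (S k)) by (apply Hl; lia); lra).
  destruct (Compare_dec.le_lt_dec (S k) j) as [h|h].
  - rewrite Nat.min_r by lia. rewrite Nat.min_r by lia.
    assert (x (S k) <= x j) by (apply (part_mono x n Hm); lia).
    destruct Rlt_dec; [ring|lra].
  - rewrite Nat.min_l by lia. rewrite Nat.min_l by lia.
    assert (x (S j) <= x (S k)) by (apply (part_mono x n Hm); lia).
    destruct Rlt_dec; [lra|ring].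
Qed.

Lemma find_j (x : nat -> R) n P : x O < P -> P <= x n ->
  exists j, (j < n)%nat /\ x j < P <= x (S j).
Proof.
  intros H0 Hn. assert (G : forall m, P <= x m -> exists j, (j < m)%nat /\ x j < P <= x (S j)).
  { induction m; intros Hm. { lra. }
    destruct (Rlt_le_dec (x m) P) as [h|h].
    - exists m. split; [lia|lra].
    - destruct (IHm h) as [j [Hj1 Hj2]]. exists j; split; [lia|auto]. }
  apply G; auto.
Qed.

Lemma sbp (l y : nat -> R) k : y O = 0 ->
  l O + rsum (fun i => (l (S i) - l i) * (1 - y (S i))) k =
  rsum (fun i => l i * (y (S i) - y i)) (S k) + l k * (1 - y (S k)).
Proof. intros y0. induction k; simpl. { rewrite y0. ring. }
  simpl in IHk. rewrite <- Rplus_assoc, IHk. ring. Qed.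

Lemma step_rep ge HH nd l x m (x0 : x O = 0) (xn : x (S m) = 1)
  (Hm : forall i, (i < S m)%nat -> x i < x (S i))
  (Hl : forall i, (S i < S m)%nat -> l i <= l (S i)) :
  V ge HH nd (stepQ l x m) = rsum (fun i => l i * (wf ge HH nd (x (S i)) - wf ge HH nd (x i))) (S m).
Proof.
  rewrite V_step.
  rewrite (rsum_ext _ (fun i => (l (S i) - l i) * (1 - wf ge HH nd (x (S i))))).
  - rewrite (sbp l (fun i => wf ge HH nd (x i))).
    + rewrite xn, w_1. ring.
    + rewrite x0. apply w_0.
  - intros i Hi. rewrite rmax0 by (assert (l i <= l (S i)) by (apply Hl; lia); lra). rewrite V_Ind; auto.
    split.
    + rewrite <- x0. apply (part_mono x (S m) Hm); lia.
    + rewrite <- xn. apply (part_mono x (S m) Hm); lia.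
Qed.

Lemma rep ge HH nd F : RS_integral (ext (Qfun F)) (wf ge HH nd) 0 1 (V ge HH nd F).
Proof.
  intros eps Heps.
  destruct (Qbound F) as [M [M1 HM]]. assert (HM' := Qbound_lr F M HM).
  set (EF := ext (Qfun F)).
  assert (EFb : forall y, - M <= EF y <= M).
  { intros y. assert (B := ext_bound F M y HM ltac:(lra)). fold EF in B. revert B. unfold Rabs. destruct Rcase_abs; lra. }
  assert (EFm : forall a b, 0 < a -> a <= b -> b <= 1 -> EF a <= EF b) by (intros; apply ext_mono; auto).
  assert (ep'p : 0 < eps / (4 * M + 1)) by (apply Rdiv_lt_0_compat; lra).
  set (ep' := mkposreal _ ep'p).
  destruct (w_unif ge HH nd ep') as [d Hd].
  exists d. split; [apply cond_pos|].
  intros n x t x0 xn Hp.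
  destruct n as [|m]. { rewrite x0 in xn. lra. }
  assert (Hm : forall i, (i < S m)%nat -> x i < x (S i)) by (intros i Hi; apply Hp; auto).
  assert (xr : forall i, (i <= S m)%nat -> 0 <= x i <= 1).
  { intros i Hi. split; [rewrite <- x0|rewrite <- xn]; apply (part_mono x (S m) Hm); lia. }
  assert (xp : forall i, (1 <= i)%nat -> (i <= S m)%nat -> 0 < x i).
  { intros i H1 H2. rewrite <- x0. apply (part_smono x (S m) Hm); lia. }
  set (w := wf ge HH nd).
  assert (Dw : forall i, (i < S m)%nat -> 0 <= w (x (S i)) - w (x i) <= ep').
  { intros i Hi. destruct (Hp i Hi) as [h1 [h2 h3]]. split.
    - assert (w (x i) <= w (x (S i))) by (apply w_mono; lra). lra.
    - assert (A := Hd (x (S i)) (x i) (xr (S i) ltac:(lia)) (xr i ltac:(lia))).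
      rewrite Rabs_pos_eq in A by lra. assert (B := A ltac:(lra)).
      fold w in B. rewrite Rabs_pos_eq in B; [lra|]. assert (w (x i) <= w (x (S i))) by (apply w_mono; lra). lra. }
  set (l := fun i => match i with O => - M | S _ => EF (x i) end).
  set (u := fun i => EF (x (S i))).
  set (u' := fun i => match i with O => M | S _ => EF (x (S i)) end).
  set (hs := fun i => match i with O => - (3 * M) | S _ => EF (x i) end).
  assert (Hl : forall i, (S i < S m)%nat -> l i <= l (S i)).
  { intros [|i] Hi; simpl. { apply EFb. } apply EFm; [apply xp; lia| |apply xr; lia].
    apply Rlt_le, Hm; lia. }
  assert (Hu : forall i, (S i < S m)%nat -> u i <= u (S i)).
  { intros i Hi. unfold u. apply EFm; [apply xp; lia| |apply xr; lia]. apply Rlt_le, Hm; lia. }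
  assert (VL : V ge HH nd (stepQ l x m) <= V ge HH nd F).
  { apply V_mono. intros p. assert (hP := proj2_sig p). set (P := proj1_sig p) in *.
    destruct (find_j x (S m) P ltac:(lra) ltac:(lra)) as [j [Hj HjP]].
    rewrite (step_eval l x (S m) Hm Hl j p Hj HjP m ltac:(lia)). rewrite Nat.min_l by lia.
    rewrite <- ext_Q. fold P EF. destruct j as [|j]; simpl.
    - apply EFb.
    - apply EFm; [apply xp; lia|lra|lra]. }
  assert (VU : V ge HH nd F <= V ge HH nd (stepQ u x m)).
  { apply V_mono. intros p. assert (hP := proj2_sig p). set (P := proj1_sig p) in *.
    destruct (find_j x (S m) P ltac:(lra) ltac:(lra)) as [j [Hj HjP]].
    rewrite (step_eval u x (S m) Hm Hu j p Hj HjP m ltac:(lia)). rewrite Nat.min_l by lia.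
    rewrite <- ext_Q. fold P EF. unfold u. apply EFm; [lra|lra|apply xr; lia]. }
  rewrite step_rep in VL, VU by auto. fold w in VL, VU.
  set (RS := rsum _ (S m)).
  set (A := rsum (fun i => l i * (w (x (S i)) - w (x i))) (S m)) in *.
  set (B := rsum (fun i => u i * (w (x (S i)) - w (x i))) (S m)) in *.
  set (B' := rsum (fun i => u' i * (w (x (S i)) - w (x i))) (S m)).
  assert (tr : forall i, (1 <= i)%nat -> (i < S m)%nat -> 0 < t i <= 1 /\ x i <= t i <= x (S i)).
  { intros i H1 H2. destruct (Hp i H2) as [_ [_ h]]. assert (0 < x i) by (apply xp; lia).
    assert (x (S i) <= 1) by (apply xr; lia). split; lra. }
  assert (AR : A <= RS).
  { apply rsum_le. intros i Hi. apply Rmult_le_compat_r; [apply Dw; auto|].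
    destruct i as [|i]; simpl. { apply EFb. }
    destruct (tr (S i) ltac:(lia) Hi) as [h1 h2]. apply EFm; [apply xp; lia|lra|lra]. }
  assert (RB : RS <= B').
  { apply rsum_le. intros i Hi. apply Rmult_le_compat_r; [apply Dw; auto|].
    destruct i as [|i]; simpl. { apply EFb. }
    destruct (tr (S i) ltac:(lia) Hi) as [h1 h2]. apply EFm; [lra|lra|apply xr; lia]. }
  assert (BB : B <= B').
  { apply rsum_le. intros i Hi. apply Rmult_le_compat_r; [apply Dw; auto|].
    destruct i as [|i]; unfold u; simpl. { apply EFb. } lra. }
  assert (W : B' - A <= ep' * (hs (S m) - hs O)).
  { unfold B', A. rewrite <- rsum_minus, <- rsum_tele, <- rsum_scal. apply rsum_le.
    intros i Hi. destruct (Dw i Hi) as [d1 d2].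
    assert (K : 0 <= u' i - l i <= hs (S i) - hs i).
    { destruct i as [|i]; simpl.
      - assert (Q := EFb (x 1%nat)). lra.
      - assert (EF (x (S i)) <= EF (x (S (S i)))) by (apply EFm; [apply xp; lia|apply Rlt_le, Hm; lia|apply xr; lia]). lra. }
    replace (u' i * (w (x (S i)) - w (x i)) - l i * (w (x (S i)) - w (x i))) with ((u' i - l i) * (w (x (S i)) - w (x i))) by ring.
    apply Rle_trans with ((u' i - l i) * ep'). { apply Rmult_le_compat_l; lra. }
    rewrite Rmult_comm. apply Rmult_le_compat_l; [apply Rlt_le, cond_pos| lra]. }
  assert (HS : hs (S m) - hs O <= 4 * M). { simpl. assert (Q := EFb (x (S m))). lra. }
  assert (E4 : ep' * (4 * M) < eps).
  { simpl. unfold Rdiv. apply Rmult_lt_reg_r with (4 * M + 1); [lra|].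
    field_simplify; lra. }
  assert (ep' * (hs (S m) - hs O) <= ep' * (4 * M)) by (apply Rmult_le_compat_l; [apply Rlt_le, cond_pos|auto]).
  apply Rabs_def1; lra.
Qed.

Lemma degenerate ge (HH : Hyps ge) : ~ ND ge -> forall F G, ~ strict ge F G.
Proof.
  intros N F G S. apply N.
  destruct (Qbound F) as [M [M1 HM]]. destruct (Qbound G) as [M' [M1' HM']].
  assert (A := Qbound_lr F M HM). assert (B := Qbound_lr G M' HM').
  exists M, (- M'). apply (ge_st_tr ge HH _ F).
  { apply (h_mono ge HH). intros p. rewrite Qconst_val. apply A. }
  apply (st_ge_tr ge HH _ G); auto. apply (h_mono ge HH). intros p. rewrite Qconst_val. apply B.
Qed.

Theorem mainTheorem11 (ge : Qb -> Qb -> Prop)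
  (Hrefl : forall F : Qb, ge F F)
  (Htrans : forall F G H : Qb, ge F G -> ge G H -> ge F H)
  (Hcompl : forall F G : Qb, ge F G \/ ge G F)
  (Hmono : forall F G : Qb, (forall p : I01, Qfun G p <= Qfun F p) -> ge F G)
  (Hcont : forall F : Qb, L1closed (fun G => ge G F) /\ L1closed (fun G => ge F G))
  (Hindep : forall (F G H X Y : Qb) (alpha : R), 0 < alpha < 1 ->
     (forall p : I01, Qfun X p = alpha * Qfun F p + (1 - alpha) * Qfun H p) ->
     (forall p : I01, Qfun Y p = alpha * Qfun G p + (1 - alpha) * Qfun H p) ->
     strict ge F G -> strict ge X Y) :
  exists w : R -> R,
    bounded_on01 w /\ nondecr_on01 w /\ continuous_on01 w /\
    exists U : Qb -> R,
      (forall F : Qb, RS_integral (ext (Qfun F)) w 0 1 (U F)) /\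
      (forall F G : Qb, strict ge F G <-> U F > U G).
Proof.
  assert (HH : Hyps ge) by (constructor; auto).
  destruct (classic (ND ge)) as [nd|nnd].
  - exists (wf ge HH nd). split; [|split; [|split]].
    + exists 1. intros x _. destruct (w_bnd ge HH nd x). rewrite Rabs_pos_eq; lra.
    + intros x y _ H _. apply w_mono; auto.
    + intros x _ eps ep. destruct (w_cont ge HH nd x eps ep) as [d [dp Hd]]. exists d. split; auto.
    + exists (V ge HH nd). split.
      * apply rep.
      * intros F G. apply V_strict.
  - exists (fun _ => 0). split; [|split; [|split]].
    + exists 0. intros. rewrite Rabs_R0. lra.
    + red; intros; cbv beta; lra.
    + intros x _ eps ep. exists 1. split; [lra|]. intros. rewrite Rminus_diag, Rabs_R0. lra.
    + exists (fun _ => 0). split.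
      * intros F eps ep. exists 1. split; [lra|]. intros n x t _ _ _.
        rewrite (rsum_ext _ (fun _ => 0)) by (intros; ring). rewrite rsum_zero, Rminus_diag, Rabs_R0. lra.
      * intros F G. split; [intros S; exfalso; apply (degenerate ge HH nnd F G S)|lra].
Qed.
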